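(* Let $\mathcal A$ be a Scott continuous, naturally ordered, partial semiring. For any family $(f_i:X\to\mathcal W(Y))_{i\in I}$ of Scott continuous functions and any directed set $D\subseteq X$, \[\sup_{x\in D}\sum_{i\in I}f_i(x)=\sum_{i\in I}f_i(\sup D).\]
   Context: A partial semiring $\mathcal A=\langle U,+,\cdot,\mathbf 0,\mathbf 1\rangle$: $\langle U,+,\mathbf 0\rangle$ is a commutative monoid with $+$ possibly partial, $\langle U,\cdot,\mathbf 1\rangle$ a monoid with total $\cdot$, two-sided distributivity, $\mathbf 0$ annihilates. Natural order: $u\le v$ iff $u+w=v$ for some $w$; naturally ordered means this is a partial order. Scott continuous: for every directed $D\subseteq U$ and $y\in U$, $\sup_{x\in D}(x+y)=(\sup D)+y$, $\sup_{x\in D}(x\cdot y)=(\sup D)\cdot y$, $\sup_{x\in D}(y\cdot x)=y\cdot\sup D$. Standing assumption: $\mathcal A$ has a top element. $\sum_{i\in I}u_i$ is the supremum of all finite sums over finite subsets of $I$. $\mathcal W(Y)$ is the set of $m:Y\to U$ with countable support $\{y:m(y)\ne\mathbf 0\}$ and defined mass $\sum_{y\in\mathrm{supp}(m)}m(y)$; sums of weighting functions are pointwise, and $\mathcal W(Y)$ is ordered by $m_1\sqsubseteq m_2$ iff $m_1+m=m_2$ for some $m$. $X$ is a partially ordered set in which the suprema considered exist; a function is Scott continuous if it preserves suprema of directed sets. *)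

(* Defs.v *)
From Stdlib Require Import List.
Import ListNotations.
Set Implicit Arguments.

Section Order.
Variable A : Type.
Variable le : A -> A -> Prop.

Definition upper_bound (S : A -> Prop) (b : A) : Prop :=
  forall x, S x -> le x b.

Definition is_sup (S : A -> Prop) (s : A) : Prop :=
  upper_bound S s /\ forall b, upper_bound S b -> le s b.

Definition directed (S : A -> Prop) : Prop :=
  (exists x, S x) /\
  forall x y, S x -> S y -> exists z, S z /\ le x z /\ le y z.

Definition partial_order : Prop :=
  (forall x, le x x) /\
  (forall x y z, le x y -> le y z -> le x z) /\
  (forall x y, le x y -> le y x -> x = y).
End Order.

(** * Partial sums given by a (functional) addition relation
    [addR a b c] means "a + b is defined and equals c". *)
Section PSums.
Variable A : Type.
Variable addR : A -> A -> A -> Prop.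
Variable zero : A.

Inductive fsumR : list A -> A -> Prop :=
| fsumR_nil : fsumR [] zero
| fsumR_cons a l t r : fsumR l t -> addR a t r -> fsumR (a :: l) r.

Definition nat_le (u v : A) : Prop := exists w, addR u w v.

Definition is_family_sum (I : Type) (u : I -> A) (s : A) : Prop :=
  (forall l : list I, NoDup l -> exists t, fsumR (map u l) t) /\
  is_sup nat_le (fun t => exists l : list I, NoDup l /\ fsumR (map u l) t) s.
End PSums.

Definition obind {A B : Type} (o : option A) (f : A -> option B) : option B :=
  match o with Some a => f a | None => None end.

Section PSR.
Variable U : Type.
Variable add : U -> U -> option U.
Variable mul : U -> U -> U.
Variables zero one : U.

Definition addR (a b c : U) : Prop := add a b = Some c.

Record is_partial_semiring : Prop := {
  add_comm : forall a b, add a b = add b a;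
  (* associativity of a partial operation: both sides defined or both
     undefined, and equal when defined *)
  add_assoc : forall a b c,
    obind (add a b) (fun ab => add ab c) = obind (add b c) (fun bc => add a bc);
  add_0r : forall a, add a zero = Some a;
  mul_assoc : forall a b c, mul a (mul b c) = mul (mul a b) c;
  mul_1l : forall a, mul one a = a;
  mul_1r : forall a, mul a one = a;
  mul_distr_l : forall a b c s, add b c = Some s ->
    add (mul a b) (mul a c) = Some (mul a s);
  mul_distr_r : forall a b c s, add b c = Some s ->
    add (mul b a) (mul c a) = Some (mul s a);
  mul_0l : forall a, mul zero a = zero;
  mul_0r : forall a, mul a zero = zero
}.

Definition nle : U -> U -> Prop := nat_le addR.

Definition naturally_ordered : Prop := partial_order nle.

Definition has_top : Prop := exists t, forall u, nle u t.

Definition scott_continuous_sr : Prop :=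
  (forall D : U -> Prop, directed nle D -> exists s, is_sup nle D s) /\
  (forall (D : U -> Prop) s y t, directed nle D -> is_sup nle D s ->
     add s y = Some t ->
     is_sup nle (fun z => exists x, D x /\ add x y = Some z) t) /\
  (forall (D : U -> Prop) s y, directed nle D -> is_sup nle D s ->
     is_sup nle (fun z => exists x, D x /\ z = mul x y) (mul s y)) /\
  (forall (D : U -> Prop) s y, directed nle D -> is_sup nle D s ->
     is_sup nle (fun z => exists x, D x /\ z = mul y x) (mul y s)).

Variable Y : Type.

Definition support (m : Y -> U) : Type := { y : Y | m y <> zero }.

Definition countable_support (m : Y -> U) : Prop :=
  exists e : nat -> option Y, forall y, m y <> zero -> exists n, e n = Some y.

Definition inW (m : Y -> U) : Prop :=
  countable_support m /\
  exists M, is_family_sum addR zero (fun p : support m => m (proj1_sig p)) M.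

Definition addW (m1 m2 m : Y -> U) : Prop :=
  inW m1 /\ inW m2 /\ inW m /\ forall y, add (m1 y) (m2 y) = Some (m y).

Definition zeroW : Y -> U := fun _ => zero.

Definition leW (m1 m2 : Y -> U) : Prop := exists m, addW m1 m m2.

Definition is_family_sumW (I : Type) (u : I -> Y -> U) (s : Y -> U) : Prop :=
  is_family_sum addW zeroW u s.
End PSR.

(* Main.v *)
Require Import Defs.
From Stdlib Require Import List Permutation Classical ClassicalEpsilon ProofIrrelevance FunctionalExtensionality FinFun.
Import ListNotations.

Section Alg.
Variable U : Type.
Variable add : U -> U -> option U.
Variable mul : U -> U -> U.
Variables zero one : U.
Variable HA : is_partial_semiring add mul zero one.
Variable Hnat : naturally_ordered add.

Notation le := (nle add).
Notation fs := (fsumR (addR add) zero).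

Lemma le_refl a : le a a.
Proof. exists zero. apply (add_0r HA). Qed.

Lemma le_trans a b c : le a b -> le b c -> le a c.
Proof. destruct Hnat as [_ [H _]]. apply H. Qed.

Lemma le_anti a b : le a b -> le b a -> a = b.
Proof. destruct Hnat as [_ [_ H]]. apply H. Qed.

Lemma add_0l a : add zero a = Some a.
Proof. rewrite (add_comm HA). apply (add_0r HA). Qed.

Lemma le_0 a : le zero a.
Proof. exists a. apply add_0l. Qed.

Lemma asc1 a b c ab abc : add a b = Some ab -> add ab c = Some abc ->
  exists bc, add b c = Some bc /\ add a bc = Some abc.
Proof.
  intros H1 H2. pose proof (add_assoc HA a b c) as E. rewrite H1 in E. simpl in E.
  rewrite H2 in E. destruct (add b c) as [bc|] eqn:E2; simpl in E; [|discriminate].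
  eauto.
Qed.

Lemma asc2 a b c bc abc : add b c = Some bc -> add a bc = Some abc ->
  exists ab, add a b = Some ab /\ add ab c = Some abc.
Proof.
  intros H1 H2. pose proof (add_assoc HA a b c) as E. rewrite H1 in E. simpl in E.
  rewrite H2 in E. destruct (add a b) as [ab|] eqn:E2; simpl in E; [|discriminate].
  eauto.
Qed.

Lemma le_addl a b c : add a b = Some c -> le a c.
Proof. intros H; exists b; exact H. Qed.

Lemma le_addr a b c : add a b = Some c -> le b c.
Proof. intros H; exists a; unfold addR; rewrite (add_comm HA); exact H. Qed.

Lemma mono1 a' a b c : le a' a -> add a b = Some c ->
  exists c', add a' b = Some c' /\ le c' c.
Proof.
  intros [r Hr] H. unfold addR in Hr. rewrite (add_comm HA) in Hr.
  destruct (asc1 _ _ _ _ _ Hr H) as [t [H1 H2]]. exists t. split; auto.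
  eapply le_addr; eauto.
Qed.

Lemma mono_add a' a b' b c : le a' a -> le b' b -> add a b = Some c ->
  exists c', add a' b' = Some c' /\ le c' c.
Proof.
  intros H1 H2 H. destruct (mono1 _ _ _ _ H1 H) as [c1 [E1 L1]].
  rewrite (add_comm HA) in E1.
  destruct (mono1 _ _ _ _ H2 E1) as [c2 [E2 L2]].
  exists c2. rewrite (add_comm HA). split; auto. eapply le_trans; eauto.
Qed.

Lemma fs_func l t t' : fs l t -> fs l t' -> t = t'.
Proof.
  intros H; revert t'; induction H; intros t' H'; inversion H'; subst; auto.
  apply IHfsumR in H3; subst. unfold addR in *. congruence.
Qed.

Lemma fs_app l1 l2 t : fs (l1 ++ l2) t ->
  exists t1 t2, fs l1 t1 /\ fs l2 t2 /\ add t1 t2 = Some t.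
Proof.
  revert t; induction l1 as [|a l1 IH]; intros t H; simpl in *.
  - exists zero, t. split; [constructor|]. split; auto. apply add_0l.
  - inversion H; subst. destruct (IH _ H2) as [t1 [t2 [F1 [F2 E]]]].
    unfold addR in H4.
    destruct (asc2 _ _ _ _ _ E H4) as [ab [E1 E2]].
    exists ab, t2. split; [econstructor; eauto|]. auto.
Qed.

Lemma fs_perm l l' t : Permutation l l' -> fs l t -> fs l' t.
Proof.
  intros P; revert t; induction P; intros t H; auto.
  - inversion H; subst. econstructor; eauto.
  - inversion H as [|a0 l0 t0 r0 G0 A0]; subst. inversion G0 as [|a1 l1 t1 r1 G1 A1]; subst.
    unfold addR in *.
    destruct (asc2 _ _ _ _ _ A1 A0) as [yx [E1 E2]].
    rewrite (add_comm HA) in E1.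
    destruct (asc1 _ _ _ _ _ E1 E2) as [yt [E3 E4]].
    econstructor; [econstructor; eauto|]. exact E4.
Qed.

Lemma fs_mono (J : Type) (u v : J -> U) l t : (forall j, le (v j) (u j)) ->
  fs (map u l) t -> exists t', fs (map v l) t' /\ le t' t.
Proof.
  intros Hle; revert t; induction l as [|a l IH]; intros t H; simpl in *.
  - exists t; split; [exact H|apply le_refl].
  - inversion H; subst. destruct (IH _ H2) as [t' [F L]].
    destruct (mono_add _ _ _ _ _ (Hle a) L H4) as [c [E Lc]].
    exists c. split; auto. econstructor; eauto.
Qed.

Lemma fs_sub (J : Type) (u : J -> U) l1 l t : NoDup l1 -> NoDup l -> incl l1 l ->
  fs (map u l) t -> exists t1, fs (map u l1) t1 /\ le t1 t.
Proof.
  intros N1 N I F.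
  set (P := fun j => if excluded_middle_informative (In j l1) then false else true).
  assert (Pm : Permutation l (l1 ++ filter P l)).
  { apply NoDup_Permutation; auto.
    - apply NoDup_app; auto. apply NoDup_filter; auto.
      intros a Ha Hb. apply filter_In in Hb. destruct Hb as [_ Hb]. unfold P in Hb.
      destruct excluded_middle_informative; [discriminate|contradiction].
    - intros x; split; intros Hx.
      + apply in_or_app. destruct (classic (In x l1)); [left; auto|right].
        apply filter_In. split; auto. unfold P. destruct excluded_middle_informative; tauto.
      + apply in_app_or in Hx. destruct Hx as [Hx|Hx]; auto. apply filter_In in Hx; tauto. }
  apply (Permutation_map u) in Pm. rewrite map_app in Pm.
  apply (fs_perm _ _ _ Pm) in F. apply fs_app in F.
  destruct F as [t1 [t2 [F1 [_ E]]]]. exists t1. split; auto. eapply le_addl; eauto.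
Qed.

Lemma fs_dir (J : Type) (u : J -> U) :
  (forall l, NoDup l -> exists t, fs (map u l) t) ->
  directed le (fun t => exists l, NoDup l /\ fs (map u l) t).
Proof.
  intros Hex. split.
  - exists zero. exists []. split; constructor.
  - intros x y [l1 [N1 F1]] [l2 [N2 F2]].
    set (P := fun j => if excluded_middle_informative (In j l1) then false else true).
    assert (N : NoDup (l1 ++ filter P l2)).
    { apply NoDup_app; auto. apply NoDup_filter; auto.
      intros a Ha Hb. apply filter_In in Hb. destruct Hb as [_ Hb]. unfold P in Hb.
      destruct excluded_middle_informative; [discriminate|contradiction]. }
    destruct (Hex _ N) as [t F]. exists t. split; [eauto|].
    split.
    + destruct (fs_sub _ u l1 _ t N1 N) as [t1 [G L]]; auto.
      { intros a Ha; apply in_or_app; auto. }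
      rewrite (fs_func _ _ _ F1 G). auto.
    + destruct (fs_sub _ u l2 _ t N2 N) as [t1 [G L]]; auto.
      { intros a Ha; apply in_or_app. destruct (classic (In a l1)); [left; auto|right].
        apply filter_In. split; auto. unfold P. destruct excluded_middle_informative; tauto. }
      rewrite (fs_func _ _ _ F2 G). auto.
Qed.


Variable Hscott : scott_continuous_sr add mul.

Lemma fam_sum_ex (J : Type) (u : J -> U) :
  (forall l, NoDup l -> exists t, fs (map u l) t) ->
  exists s, is_family_sum (addR add) zero u s.
Proof.
  intros H. destruct ((proj1 Hscott) _ (fs_dir _ u H)) as [s Hs].
  exists s. split; auto.
Qed.

Variable Y : Type.
Notation W := (inW add zero (Y:=Y)).
Notation leW := (leW add zero (Y:=Y)).

Lemma inW_zero : W (@zeroW U zero Y).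
Proof.
  split.
  - exists (fun _ => None). intros y H. exfalso; apply H; reflexivity.
  - exists zero. split.
    + intros l _. exists zero. destruct l as [|p l]; [constructor|].
      exfalso. destruct p as [y Hy]. apply Hy. reflexivity.
    + split.
      * intros t [l [_ F]]. destruct l as [|p l].
        -- replace t with zero by (inversion F; auto). apply le_refl.
        -- exfalso. destruct p as [y Hy]. apply Hy. reflexivity.
      * intros b Hb. apply Hb. exists []. split; constructor.
Qed.

Lemma zero_below a : le a zero -> a = zero.
Proof. intros H. apply le_anti; auto. apply le_0. Qed.

Lemma inW_down (m1 m2 : Y -> U) : W m2 -> (forall y, le (m1 y) (m2 y)) -> W m1.
Proof.
  intros [[e He] [M HM]] Hle.
  assert (Hs : forall y, m1 y <> zero -> m2 y <> zero).
  { intros y H1 H2. apply H1. apply zero_below. rewrite <- H2. auto. }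
  split.
  - exists e. intros y Hy. apply He. auto.
  - apply fam_sum_ex. intros l N.
    set (iota := fun p : support zero m1 =>
                   exist (fun y => m2 y <> zero) (proj1_sig p) (Hs _ (proj2_sig p))).
    assert (Inj : Injective iota).
    { intros [a Ha] [b Hb] E. unfold iota in E. simpl in E.
      apply (f_equal (@proj1_sig _ _)) in E. simpl in E. subst b.
      f_equal. apply proof_irrelevance. }
    destruct (proj1 HM (map iota l) (Injective_map_NoDup Inj N)) as [t F].
    rewrite map_map in F. simpl in F.
    destruct (fs_mono _ (fun p => m2 (proj1_sig p)) (fun p => m1 (proj1_sig p)) l t) as [t' [F' _]]; eauto.
Qed.

Lemma leW_pw c1 c2 : leW c1 c2 -> W c1 /\ W c2 /\ forall y, le (c1 y) (c2 y).
Proof.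
  intros [w [H1 [H2 [H3 H4]]]]. split; [auto|split; [auto|]]. intros y. exists (w y). apply H4.
Qed.

Lemma le_pw_W c1 c2 : W c2 -> (forall y, le (c1 y) (c2 y)) -> leW c1 c2.
Proof.
  intros H2 Hle.
  set (w := fun y => epsilon (inhabits zero) (fun r => add (c1 y) r = Some (c2 y))).
  assert (Hw : forall y, add (c1 y) (w y) = Some (c2 y)).
  { intros y. unfold w. apply (epsilon_spec (inhabits zero) (fun r => add (c1 y) r = Some (c2 y))).
    apply Hle. }
  exists w. split; [|split; [|split]]; auto.
  - apply (inW_down c1 c2); auto.
  - apply (inW_down w c2); auto. intros y. eapply le_addr; eauto.
Qed.

Lemma sup_W (S : (Y -> U) -> Prop) c :
  (forall h, S h -> W h) -> (exists h, S h) -> W c ->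
  (forall h, S h -> forall y, le (h y) (c y)) ->
  (forall y B, (forall h, S h -> le (h y) B) -> le (c y) B) ->
  is_sup leW S c.
Proof.
  intros HW [h0 Hh0] Hc Hub Hl. split.
  - intros h Hh. apply le_pw_W; auto.
  - intros b Hb. destruct (leW_pw _ _ (Hb _ Hh0)) as [_ [Wb _]].
    apply le_pw_W; auto. intros y. apply Hl. intros h Hh.
    apply (leW_pw _ _ (Hb _ Hh)).
Qed.

Lemma W_sup_pw (S : (Y -> U) -> Prop) c : is_sup leW S c -> (exists h, S h) ->
  (forall y, exists s, is_sup le (fun u => exists h, S h /\ u = h y) s) ->
  forall y B, (forall h, S h -> le (h y) B) -> le (c y) B.
Proof.
  intros [Hub Hl] [h0 Hh0] Hex y0 B HB.
  set (c' := fun y => epsilon (inhabits zero) (fun s => is_sup le (fun u => exists h, S h /\ u = h y) s)).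
  assert (Hc' : forall y, is_sup le (fun u => exists h, S h /\ u = h y) (c' y)).
  { intros y. unfold c'. apply (epsilon_spec (inhabits zero) (fun s => is_sup le (fun u => exists h, S h /\ u = h y) s)). apply Hex. }
  destruct (leW_pw _ _ (Hub _ Hh0)) as [_ [Wc _]].
  assert (Le1 : forall y, le (c' y) (c y)).
  { intros y. apply (proj2 (Hc' y)). intros u [h [Hh ->]]. apply (leW_pw _ _ (Hub _ Hh)). }
  assert (Wc' : W c') by (apply (inW_down c' c); auto).
  assert (L : leW c c').
  { apply Hl. intros h Hh. apply le_pw_W; auto. intros y. apply (proj1 (Hc' y)). eauto. }
  apply leW_pw in L. eapply le_trans; [apply L|]. apply (proj2 (Hc' y0)).
  intros u [h [Hh ->]]. auto.
Qed.

Lemma fsW_pw ls T : fsumR (@addW U add zero Y) (@zeroW U zero Y) ls T ->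
  W T /\ forall y, fs (map (fun h => h y) ls) (T y).
Proof.
  intros F; induction F as [|a l t r F [IH1 IH2] E].
  - split; [apply inW_zero|]. intros y; constructor.
  - destruct E as [_ [_ [Wr E]]]. split; auto. intros y. simpl. econstructor; eauto. apply E.
Qed.

Lemma pw_fsW ls : forall T, (forall h, In h ls -> W h) -> W T ->
  (forall y, fs (map (fun h => h y) ls) (T y)) ->
  fsumR (@addW U add zero Y) (@zeroW U zero Y) ls T.
Proof.
  induction ls as [|a ls IH]; intros T Hin WT HT; simpl in *.
  - replace T with (@zeroW U zero Y). constructor.
    apply functional_extensionality. intros y. specialize (HT y). inversion HT; auto.
  - set (T' := fun y => epsilon (inhabits zero) (fun t => fs (map (fun h => h y) ls) t /\ add (a y) t = Some (T y))).
    assert (HT' : forall y, fs (map (fun h => h y) ls) (T' y) /\ add (a y) (T' y) = Some (T y)).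
    { intros y. unfold T'. apply (epsilon_spec (inhabits zero) (fun t => fs (map (fun h => h y) ls) t /\ add (a y) t = Some (T y))).
      specialize (HT y). inversion HT; subst. eauto. }
    assert (WT' : W T').
    { apply (inW_down T' T); auto. intros y. eapply le_addr. apply HT'. }
    apply (@fsumR_cons _ _ _ a ls T' T).
    + apply IH; auto. intros y; apply HT'.
    + split; [|split; [|split]]; auto. intros y; apply HT'.
Qed.


Lemma cont (X : Type) (leX : X -> X -> Prop) (D : X -> Prop) (HD : directed leX D)
  (I : Type) (a : I -> X -> U) (A : I -> U)
  (H1 : forall i, is_sup le (fun u => exists x, D x /\ u = a i x) (A i))
  (H2 : forall i x x', D x -> D x' -> leX x x' -> le (a i x) (a i x')) :
  forall L t, fs (map A L) t ->
  (forall x, D x -> exists u, fs (map (fun i => a i x) L) u /\ le u t) /\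
  (forall B, (forall x u, D x -> fs (map (fun i => a i x) L) u -> le u B) -> le t B).
Proof.
  destruct HD as [[x0 Dx0] Hdir].
  pose proof (proj1 (proj2 Hscott)) as Sc2.
  induction L as [|i L IH]; intros t F; simpl in *.
  - assert (t = zero) by (inversion F; auto). subst t. split.
    + intros x _. exists zero. split; [constructor|apply le_refl].
    + intros B _. apply le_0.
  - inversion F as [|a0 l0 T t0 FL E]; subst. unfold addR in E.
    destruct (IH _ FL) as [P1 P2].
    assert (Mx : forall x x' u', D x -> D x' -> leX x x' ->
              fs (map (fun i => a i x') L) u' ->
              exists u, fs (map (fun i => a i x) L) u /\ le u u').
    { intros x x' u' Dx Dx' Lx F'. apply (fs_mono _ (fun i => a i x') (fun i => a i x) L u'); auto. }
    split.
    + intros x Dx. destruct (P1 x Dx) as [u [Fu Lu]].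
      assert (Lai : le (a i x) (A i)) by (apply (proj1 (H1 i)); eauto).
      destruct (mono_add _ _ _ _ _ Lai Lu E) as [c [Ec Lc]].
      exists c. split; auto. econstructor; eauto.
    + intros B HB.
      assert (DA : directed le (fun u => exists x, D x /\ u = a i x)).
      { split; [eauto|]. intros u1 u2 [x1 [D1 ->]] [x2 [D2 ->]].
        destruct (Hdir x1 x2 D1 D2) as [z [Dz [L1 L2]]]. exists (a i z). split; eauto. }
      apply (proj2 (Sc2 _ _ _ _ DA (H1 i) E)).
      intros z [v [[x [Dx ->]] Ez]]. rewrite (add_comm HA) in Ez.
      assert (DL : directed le (fun u => exists x', D x' /\ fs (map (fun i => a i x') L) u)).
      { split.
        - destruct (P1 x0 Dx0) as [u [Fu _]]. eauto.
        - intros u1 u2 [x1 [D1 F1]] [x2 [D2 F2]].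
          destruct (Hdir x1 x2 D1 D2) as [z0 [Dz [L1 L2]]].
          destruct (P1 z0 Dz) as [u0 [F0 _]]. exists u0. split; eauto.
          destruct (Mx _ _ _ D1 Dz L1 F0) as [w1 [G1 K1]].
          destruct (Mx _ _ _ D2 Dz L2 F0) as [w2 [G2 K2]].
          rewrite (fs_func _ _ _ F1 G1), (fs_func _ _ _ F2 G2). auto. }
      assert (SL : is_sup le (fun u => exists x', D x' /\ fs (map (fun i => a i x') L) u) T).
      { split.
        - intros u [x' [Dx' Fu]]. destruct (P1 x' Dx') as [u' [Fu' Lu']].
          rewrite (fs_func _ _ _ Fu Fu'). auto.
        - intros b Hb. apply P2. intros x' u Dx' Fu. apply Hb. eauto. }
      apply (proj2 (Sc2 _ _ _ _ DL SL Ez)).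
      intros z' [u' [[x' [Dx' Fu']] Ez']].
      destruct (Hdir x x' Dx Dx') as [x'' [Dx'' [Lx Lx']]].
      destruct (P1 x'' Dx'') as [u'' [Fu'' Lu'']].
      assert (Lai : le (a i x'') (A i)) by (apply (proj1 (H1 i)); eauto).
      destruct (mono_add _ _ _ _ _ Lai Lu'' E) as [w [Ew Lw]].
      assert (Bw : le w B) by (apply (HB x''); auto; econstructor; eauto).
      destruct (Mx _ _ _ Dx' Dx'' Lx' Fu'') as [v' [Gv Kv]].
      rewrite (fs_func _ _ _ Fu' Gv) in Ez'.
      rewrite (add_comm HA) in Ez'.
      destruct (mono_add _ _ _ _ _ (H2 i x x'' Dx Dx'' Lx) Kv Ew) as [c [Ec Lc]].
      rewrite Ez' in Ec. injection Ec as ->. eapply le_trans; eauto.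
Qed.


Lemma is_sup_ext (P Q : U -> Prop) s : (forall u, P u <-> Q u) -> is_sup le P s -> is_sup le Q s.
Proof.
  intros E [H1 H2]. split.
  - intros u Hu. apply H1, E, Hu.
  - intros b Hb. apply H2. intros u Hu. apply Hb, E, Hu.
Qed.

Lemma main
  (X : Type) (leX : X -> X -> Prop) (HX : partial_order leX)
  (I : Type) (f : I -> X -> Y -> U)
  (HfW : forall i x, W (f i x))
  (Hfc : forall i (D : X -> Prop) s, directed leX D -> is_sup leX D s ->
           is_sup leW (fun m => exists x, D x /\ m = f i x) (f i s))
  (D : X -> Prop) (sD : X) (HD : directed leX D) (HsD : is_sup leX D sD)
  (m : Y -> U) (Hm : @is_family_sumW U add zero Y I (fun i => f i sD) m) :
  exists g : X -> Y -> U,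
    (forall x, D x -> @is_family_sumW U add zero Y I (fun i => f i x) (g x)) /\
    is_sup leW (fun n => exists x, D x /\ n = g x) m.
Proof.
  pose proof (proj1 Hscott) as Sc1.
  destruct HX as [Rx [Tx Ax]].
  destruct Hm as [Hm1 Hm2].
  assert (Mon : forall i x x', leX x x' -> forall y, le (f i x y) (f i x' y)).
  { intros i x x' Lx y.
    assert (Dd : directed leX (fun z => z = x \/ z = x')).
    { split; [eauto|]. intros a b Ha Hb. exists x'. split; [auto|].
      destruct Ha as [->| ->]; destruct Hb as [->| ->]; auto. }
    assert (Sd : is_sup leX (fun z => z = x \/ z = x') x').
    { split. - intros z [->| ->]; auto. - intros b Hb. apply Hb. auto. }
    apply (leW_pw _ _ (proj1 (Hfc i _ _ Dd Sd) (f i x) (ex_intro _ x (conj (or_introl eq_refl) eq_refl)))). }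
  destruct HD as [[x0 Dx0] Hdir].
  assert (Wm : W m).
  { apply (proj2 (leW_pw (@zeroW U zero Y) m (proj1 Hm2 _ (ex_intro _ [] (conj (NoDup_nil _) (fsumR_nil _ _)))))). }
  assert (TsD : forall L, NoDup L -> exists T, W T /\
            (forall y, fs (map (fun i => f i sD y) L) (T y)) /\ forall y, le (T y) (m y)).
  { intros L N. destruct (Hm1 L N) as [T F]. exists T.
    destruct (fsW_pw _ _ F) as [WT PT]. split; auto. split.
    - intros y. specialize (PT y). rewrite map_map in PT. exact PT.
    - apply leW_pw. apply (proj1 Hm2). eauto. }
  assert (H1 : forall y i, is_sup le (fun u => exists x, D x /\ u = f i x y) (f i sD y)).
  { intros y i. pose proof (Hfc i D sD (conj (ex_intro _ x0 Dx0) Hdir) HsD) as Hs. split.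
    - intros u [x [Dx ->]]. apply (leW_pw _ _ (proj1 Hs (f i x) (ex_intro _ x (conj Dx eq_refl)))).
    - intros B HB. apply (W_sup_pw _ _ Hs).
      + exists (f i x0). eauto.
      + intros y'. apply Sc1. split.
        * exists (f i x0 y'). eauto.
        * intros u1 u2 [h1 [[x1 [D1 ->]] ->]] [h2 [[x2 [D2 ->]] ->]].
          destruct (Hdir x1 x2 D1 D2) as [z [Dz [L1 L2]]].
          exists (f i z y'). split; eauto.
      + intros h [x [Dx ->]]. apply HB. eauto. }
  assert (C : forall y L t, fs (map (fun i => f i sD y) L) t ->
     (forall x, D x -> exists u, fs (map (fun i => f i x y) L) u /\ le u t) /\
     (forall B, (forall x u, D x -> fs (map (fun i => f i x y) L) u -> le u B) -> le t B)).
  { intros y. apply (cont X leX D (conj (ex_intro _ x0 Dx0) Hdir) I (fun i x => f i x y) (fun i => f i sD y)).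
    - apply H1.
    - intros i x x' _ _ Lx. apply Mon; auto. }
  assert (Ex : forall x, D x -> forall y L, NoDup L -> exists t, fs (map (fun i => f i x y) L) t /\ le t (m y)).
  { intros x Dx y L N. destruct (TsD L N) as [T [WT [PT LT]]].
    destruct (proj1 (C y L _ (PT y)) x Dx) as [u [Fu Lu]]. exists u. split; auto.
    eapply le_trans; eauto. }
  set (Sx := fun x y t => exists L, NoDup L /\ fs (map (fun i => f i x y) L) t).
  set (g := fun x y => epsilon (inhabits zero) (fun s => is_sup le (Sx x y) s)).
  assert (gspec : forall x, D x -> forall y, is_sup le (Sx x y) (g x y)).
  { intros x Dx y. unfold g. apply (epsilon_spec (inhabits zero) (fun s => is_sup le (Sx x y) s)).
    apply Sc1. apply fs_dir. intros L N. destruct (Ex x Dx y L N) as [t [F _]]. eauto. }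
  assert (gm : forall x, D x -> forall y, le (g x y) (m y)).
  { intros x Dx y. apply (proj2 (gspec x Dx y)). intros t [L [N F]].
    destruct (Ex x Dx y L N) as [t' [F' L']]. rewrite (fs_func _ _ _ F F'). auto. }
  assert (gW : forall x, D x -> W (g x)).
  { intros x Dx. apply (inW_down _ m); auto. }
  exists g. split.
  - intros x Dx.
    assert (P1 : forall L, NoDup L -> exists T, fsumR (@addW U add zero Y) (@zeroW U zero Y) (map (fun i => f i x) L) T).
    { intros L N.
      set (T := fun y => epsilon (inhabits zero) (fun t => fs (map (fun i => f i x y) L) t)).
      assert (HT : forall y, fs (map (fun i => f i x y) L) (T y)).
      { intros y. unfold T. apply (epsilon_spec (inhabits zero) (fun t => fs (map (fun i => f i x y) L) t)).
        destruct (Ex x Dx y L N) as [t [F _]]. eauto. }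
      destruct (TsD L N) as [T0 [WT0 [PT0 _]]].
      exists T. apply pw_fsW.
      - intros h Hh. apply in_map_iff in Hh. destruct Hh as [i [<- _]]. apply HfW.
      - apply (inW_down _ T0); auto. intros y.
        destruct (proj1 (C y L _ (PT0 y)) x Dx) as [u [Fu Lu]].
        rewrite (fs_func _ _ _ (HT y) Fu). auto.
      - intros y. rewrite map_map. apply HT. }
    split; [exact P1|].
    apply sup_W.
    + intros h [l [_ F]]. apply (fsW_pw _ _ F).
    + exists (@zeroW U zero Y). exists []. split; constructor.
    + auto.
    + intros h [l [N F]] y. apply (proj1 (gspec x Dx y)). exists l. split; auto.
      pose proof (proj2 (fsW_pw _ _ F) y) as G. rewrite map_map in G. exact G.
    + intros y B HB. apply (proj2 (gspec x Dx y)). intros t [L [N F]].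
      destruct (P1 L N) as [h Fh]. pose proof (proj2 (fsW_pw _ _ Fh) y) as G. rewrite map_map in G.
      rewrite (fs_func _ _ _ F G). apply HB. eauto.
  - apply sup_W.
    + intros h [x [Dx ->]]. auto.
    + eauto.
    + auto.
    + intros h [x [Dx ->]] y. auto.
    + intros y B HB.
      apply (W_sup_pw _ _ Hm2).
      * exists (@zeroW U zero Y). exists []. split; constructor.
      * intros y'. destruct (Sc1 _ (fs_dir _ (fun i => f i sD y') (fun L N => match TsD L N with ex_intro _ T (conj _ (conj P _)) => ex_intro _ (T y') (P y') end))) as [s Hs].
        exists s. revert Hs. apply is_sup_ext. intros u. split.
        -- intros [L [N F]]. destruct (Hm1 L N) as [h Fh]. exists h. split; eauto.
           pose proof (proj2 (fsW_pw _ _ Fh) y') as G. rewrite map_map in G. apply (fs_func _ _ _ F G).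
        -- intros [h [[L [N F]] ->]]. exists L. split; auto.
           pose proof (proj2 (fsW_pw _ _ F) y') as G. rewrite map_map in G. exact G.
      * intros h [L [N F]]. pose proof (proj2 (fsW_pw _ _ F) y) as G. rewrite map_map in G.
        apply (proj2 (C y L _ G)). intros x u Dx Fu.
        eapply le_trans; [|apply (HB (g x)); eauto].
        apply (proj1 (gspec x Dx y)). exists L. split; auto.
Qed.

End Alg.

Theorem lemmaA1
  (U : Type) (add : U -> U -> option U) (mul : U -> U -> U) (zero one : U)
  (HA : is_partial_semiring add mul zero one)
  (Hnat : naturally_ordered add)
  (Htop : has_top add)
  (Hscott : scott_continuous_sr add mul)
  (X : Type) (leX : X -> X -> Prop) (HX : partial_order leX)
  (Y : Type) (I : Type) (f : I -> X -> Y -> U)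
  (HfW : forall i x, inW add zero (f i x))
  (Hfc : forall i (D : X -> Prop) s, directed leX D -> is_sup leX D s ->
           is_sup (@leW U add zero Y) (fun m => exists x, D x /\ m = f i x) (f i s))
  (D : X -> Prop) (sD : X) (HD : directed leX D) (HsD : is_sup leX D sD)
  (m : Y -> U) (Hm : @is_family_sumW U add zero Y I (fun i => f i sD) m) :
  exists g : X -> Y -> U,
    (forall x, D x -> @is_family_sumW U add zero Y I (fun i => f i x) (g x)) /\
    is_sup (@leW U add zero Y) (fun n => exists x, D x /\ n = g x) m.
Proof.
  exact (main U add mul zero one HA Hnat Hscott Y X leX HX I f HfW Hfc D sD HD HsD m Hm).
Qed.
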